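(* In the setting described in the context, for every $S\in\Omega_{worm}$, $$\pi_{worm}(S)\ \ge\ \frac12\left(\frac{x_{\min}}{2}\right)^{|E_C|},$$ where $x_{\min}=\min_{e\in E_C}x_e$.
   Context: Let $\beta>1$. Let $G=(V,E)$ be a finite connected simple 4-regular graph with, at each vertex, its four incident edges labelled bijectively $x_1,\dots,x_4$. Each edge has two half-edges (one at each endpoint). Pairing at each vertex slot $x_1$ with $x_4$ and $x_2$ with $x_3$, and following edges by entering a vertex through one slot of a pair and leaving through the other, partitions $E$ into closed trails (circuits) $C_1,\dots,C_m$. For each circuit a reference half-edge $h_i$ is fixed. Consider orientations (equivalently, maps $\sigma$ from half-edges to $\{0,1\}$ with opposite values on the two half-edges of each edge) of nonzero weight for the vertex function $f^*$ with $f^*(0011)=f^*(1100)=\beta$, $f^*(0101)=f^*(1010)=1$, $f^*=0$ otherwise (evaluated at $v$ on the half-edges at $v$ in slot order $x_1,\dots,x_4$); in these, values alternate along each circuit and $\sigma(C_i):=\sigma(h_i)$. A vertex at which the pair $\{x_1,x_4\}$ lies on $C_i$ and $\{x_2,x_3\}$ on $C_j$, $i\neq j$, is an agree-vertex if its weight is $\beta$ exactly when $\sigma(C_i)=\sigma(C_j)$ (and $1$ otherwise), and a disagree-vertex if its weight is $\beta$ exactly when $\sigma(C_i)\neq\sigma(C_j)$; $A(i,j),D(i,j)$ count these. $G_C=(\mathcal{C},E_C)$, $\mathcal{C}=\{C_1,\dots,C_m\}$, has an edge $\{C_i,C_j\}$ iff $i\ne j$ and they share such a vertex. Assume the system $X_u\oplus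 X_v=\mathbf{I}(A(u,v)<D(u,v))$ for all $\{u,v\}\in E_C$ has a solution over $\mathrm{GF}(2)$, and for each circuit with $X_i=1$ replace $h_i$ by an adjacent half-edge of $C_i$ (which complements $\sigma(C_i)$ and swaps agree/disagree vertices between $C_i$ and each other circuit); with $A,D$ recomputed after this change, set $\beta_e=\beta^{A(u,v)-D(u,v)}$ and $x_e=(\beta_e-1)/(\beta_e+1)$ for $e=\{u,v\}\in E_C$. Worm measure. For $k\ge0$ let $\Omega_k$ be the set of edge sets $S\subseteq E_C$ such that exactly $k$ vertices of $G_C$ have odd degree in $(\mathcal{C},S)$; $\Omega_{worm}=\Omega_0\cup\Omega_2$. Let $w(S)=\prod_{e\in S}x_e$, $Z_k=\sum_{S\in\Omega_k}w(S)$, $\xi(S)=m$ if $S\in\Omega_0$, $\xi(S)=2$ if $S\in\Omega_2$, $\xi(S)=0$ otherwise, $w_{worm}(S)=\xi(S)w(S)$, $Z_{worm}=mZ_0+2Z_2$ and $\pi_{worm}(S)=w_{worm}(S)/Z_{worm}$. *)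

(* Defs.v *)
From mathcomp Require Import all_boot all_order all_algebra.
Set Implicit Arguments. Unset Strict Implicit. Unset Printing Implicit Defensive.
Import Order.TTheory GRing.Theory Num.Theory.
Local Open Scope ring_scope.

(* The 4-regular labelled graph G is given by  nb : V -> 'I_4 -> V :
   nb v i is the other endpoint of the edge in slot x_(i+1) at v.
   Half-edges are pairs (v, i) : V * 'I_4 (the half-edge at v in slot i). *)

Section Worm.
Variables (R : realFieldType) (V : finType) (nb : V -> 'I_4 -> V) (beta : R).

Definition slot0 : 'I_4 := inord 0.
Definition slot1 : 'I_4 := inord 1.
Definition slot2 : 'I_4 := inord 2.
Definition slot3 : 'I_4 := inord 3.

Definition opp_slot (h : V * 'I_4) : 'I_4 :=
  odflt ord0 [pick j | nb (nb h.1 h.2) j == h.1].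
Definition opp_he (h : V * 'I_4) : V * 'I_4 := (nb h.1 h.2, opp_slot h).
(* pairing x1<->x4, x2<->x3 at a vertex *)
Definition pair_he (h : V * 'I_4) : V * 'I_4 := (h.1, rev_ord h.2).

Definition link : rel (V * 'I_4) :=
  fun h h' => (h' == opp_he h) || (h' == pair_he h).

Definition circ (h : V * 'I_4) : {set V * 'I_4} := [set h' | connect link h h'].
Definition circuits : {set {set V * 'I_4}} := [set circ h | h : V * 'I_4].

Definition crossing (v : V) : bool := circ (v, slot0) != circ (v, slot1).
Definition cpair (v : V) : {set {set V * 'I_4}} :=
  [set circ (v, slot0); circ (v, slot1)].
(* edges of G_C, as 2-element sets of circuits *)
Definition EC : {set {set {set V * 'I_4}}} := [set cpair v | v : V & crossing v].

(* vertex function f^*, arguments in slot order x1..x4 *)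
Definition fstar (a b c d : bool) : R :=
  if [&& ~~ a, ~~ b, c & d] || [&& a, b, ~~ c & ~~ d] then beta
  else if [&& ~~ a, b, ~~ c & d] || [&& a, ~~ b, c & ~~ d] then 1 else 0.

Definition orientation (s : {ffun V * 'I_4 -> bool}) : bool :=
  [forall h, s (opp_he h) == ~~ s h].
Definition vweight (s : {ffun V * 'I_4 -> bool}) (v : V) : R :=
  fstar (s (v, slot0)) (s (v, slot1)) (s (v, slot2)) (s (v, slot3)).
Definition nonzero_orientation (s : {ffun V * 'I_4 -> bool}) : bool :=
  orientation s && (\prod_(v : V) vweight s v != 0).

Variable ref : {set V * 'I_4} -> V * 'I_4.

Definition agree (v : V) : bool :=
  [forall s, nonzero_orientation s ==>
     ((vweight s v == beta) ==
      (s (ref (circ (v, slot0))) == s (ref (circ (v, slot1)))))].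
Definition disagree (v : V) : bool :=
  [forall s, nonzero_orientation s ==>
     ((vweight s v == beta) ==
      (s (ref (circ (v, slot0))) != s (ref (circ (v, slot1)))))].

Definition Acount (e : {set {set V * 'I_4}}) : nat :=
  #|[set v | [&& crossing v, cpair v == e & agree v]]|.
Definition Dcount (e : {set {set V * 'I_4}}) : nat :=
  #|[set v | [&& crossing v, cpair v == e & disagree v]]|.

Definition beta_e (e : {set {set V * 'I_4}}) : R :=
  beta ^ ((Acount e)%:Z - (Dcount e)%:Z).
Definition x_e (e : {set {set V * 'I_4}}) : R :=
  (beta_e e - 1) / (beta_e e + 1).

Definition degC (S : {set {set {set V * 'I_4}}}) (C : {set V * 'I_4}) : nat :=
  #|[set e in S | C \in e]|.
Definition n_odd (S : {set {set {set V * 'I_4}}}) : nat :=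
  #|[set C in circuits | odd (degC S C)]|.
Definition Omega (k : nat) : {set {set {set {set V * 'I_4}}}} :=
  [set S : {set {set {set V * 'I_4}}} | (S \subset EC) && (n_odd S == k)].
Definition Omega_worm := Omega 0 :|: Omega 2.

Definition m_circ : nat := #|circuits|.
Definition wS (S : {set {set {set V * 'I_4}}}) : R := \prod_(e in S) x_e e.
Definition Zk (k : nat) : R := \sum_(S in Omega k) wS S.
Definition xi (S : {set {set {set V * 'I_4}}}) : R :=
  if S \in Omega 0 then m_circ%:R else if S \in Omega 2 then 2 else 0.
Definition w_worm S : R := xi S * wS S.
Definition Z_worm : R := m_circ%:R * Zk 0 + 2 * Zk 2.
Definition pi_worm S : R := w_worm S / Z_worm.

(* min over E_C; every x_e < 1, so the neutral 1 only matters when E_C = set0,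
   where it is irrelevant since the exponent |E_C| is then 0 *)
Definition x_min : R := \big[Num.min/1]_(e in EC) x_e e.

End Worm.

(* Main.v *)
Require Import Defs.
From mathcomp Require Import all_boot all_order all_algebra.
From mathcomp Require Import ring lra.
Import Order.TTheory GRing.Theory Num.Theory.
Set Implicit Arguments. Unset Strict Implicit. Unset Printing Implicit Defensive.

Section G.
Variables (V : finType) (nb : V -> 'I_4 -> V).
Hypothesis Hinj : forall v, injective (nb v).
Hypothesis Hsym : forall v i, exists j, nb (nb v i) j = v.

Lemma opp_slotP h : nb (nb h.1 h.2) (opp_slot nb h) = h.1.
Proof.
rewrite /opp_slot; case: pickP => [j /eqP //| H].
have [j Hj] := Hsym h.1 h.2. by move: (H j); rewrite Hj eqxx.
Qed.

Lemma opp_heK : involutive (opp_he nb).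
Proof.
move=> [v i]; rewrite /opp_he /=.
have E := opp_slotP (v, i); rewrite /= in E.
have E2 := opp_slotP (nb v i, opp_slot nb (v, i)); rewrite /= E in E2.
rewrite E; congr pair; exact: (Hinj E2).
Qed.

Lemma pair_heK : involutive (@pair_he V).
Proof. by move=> [v i]; rewrite /pair_he /= rev_ordK. Qed.

Lemma link_sym : symmetric (link nb).
Proof.
move=> h h'; rewrite /link; congr orb; apply/eqP/eqP => ->;
  by rewrite ?opp_heK ?pair_heK.
Qed.

Lemma circ_conn h h' : connect (link nb) h h' -> circ nb h = circ nb h'.
Proof.
move=> H; apply/setP=> x; rewrite !inE; apply/idP/idP => Hx.
  by apply: connect_trans Hx; rewrite (sym_connect_sym link_sym).
exact: connect_trans H Hx.
Qed.

Lemma circ_link h h' : link nb h h' -> circ nb h = circ nb h'.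
Proof. by move=> H; apply: circ_conn; apply: connect1. Qed.

Lemma slot_cases (i : 'I_4) :
  [\/ i = slot0 /\ rev_ord i = slot3, i = slot3 /\ rev_ord i = slot0,
       i = slot1 /\ rev_ord i = slot2 | i = slot2 /\ rev_ord i = slot1].
Proof.
case: i => [[|[|[|[|k]]]] Hk] //;
  [constructor 1 | constructor 3 | constructor 4 | constructor 2];
  by split; apply: val_inj; rewrite /= ?inordK.
Qed.

Lemma circ_cases v i :
  circ nb (v, i) = circ nb (v, slot0) \/ circ nb (v, i) = circ nb (v, slot1).
Proof.
case: (slot_cases i) => [[-> _]|[-> _]|[-> _]|[-> _]]; auto.
  left; apply: circ_link; rewrite /link /pair_he /=.
  have -> : rev_ord slot3 = slot0 by apply: val_inj; rewrite /= ?inordK.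
  by rewrite eqxx orbT.
right; apply: circ_link; rewrite /link /pair_he /=.
have -> : rev_ord slot2 = slot1 by apply: val_inj; rewrite /= ?inordK.
by rewrite eqxx orbT.
Qed.

Lemma circ_edge v i : circ nb (v, i) = circ nb (nb v i, opp_slot nb (v, i)).
Proof. by apply: circ_link; rewrite /link /opp_he /= eqxx. Qed.

End G.

Definition sdiff (T : finType) (A B : {set T}) : {set T} := (A :\: B) :|: (B :\: A).

Lemma in_sdiff (T : finType) (A B : {set T}) x : (x \in sdiff A B) = (x \in A) (+) (x \in B).
Proof. by rewrite !inE; case: (x \in A); case: (x \in B). Qed.

Lemma sdiffK (T : finType) (A B : {set T}) : sdiff (sdiff A B) B = A.
Proof. by apply/setP => x; rewrite !in_sdiff addbK. Qed.

Lemma sdiff0s (T : finType) (A : {set T}) : sdiff set0 A = A.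
Proof. by apply/setP => x; rewrite !in_sdiff inE. Qed.

Lemma sdiff_sub (T : finType) (A B C : {set T}) :
  A \subset C -> B \subset C -> sdiff A B \subset C.
Proof.
move=> /subsetP HA /subsetP HB; apply/subsetP => x; rewrite in_sdiff.
by case HxA: (x \in A); case HxB: (x \in B) => //= _; [apply: HA | apply: HB].
Qed.

Section O.
Variables (V : finType) (nb : V -> 'I_4 -> V).
Implicit Types (S P : {set {set {set V * 'I_4}}}) (C : {set V * 'I_4}) (e : {set {set V * 'I_4}}).

Definition oddset (S : {set {set {set V * 'I_4}}}) :=
  [set C in circuits nb | odd (degC S C)].

Lemma degC_sdiff S P C : odd (degC (sdiff S P) C) = odd (degC S C) (+) odd (degC P C).
Proof.
rewrite /degC.
have E (X : {set {set {set V * 'I_4}}}) : [set e in X | C \in e] = X :&: [set e : {set {set V * 'I_4}} | C \in e] by apply/setP => e; rewrite !inE.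
rewrite !E; set K := [set e : {set {set V * 'I_4}} | C \in e].
have h1 : #|S :&: K| = #|S :&: P :&: K| + #|(S :\: P) :&: K|.
  rewrite -(cardsID P (S :&: K)); congr (_ + _); apply: eq_card => e; rewrite !inE;
  by case: (e \in S); case: (e \in P); case: (C \in e).
have h2 : #|P :&: K| = #|S :&: P :&: K| + #|(P :\: S) :&: K|.
  rewrite -(cardsID S (P :&: K)); congr (_ + _); apply: eq_card => e; rewrite !inE;
  by case: (e \in S); case: (e \in P); case: (C \in e).
have h3 : #|sdiff S P :&: K| = #|(S :\: P) :&: K| + #|(P :\: S) :&: K|.
  rewrite -cardsUI.
  have -> : #|((S :\: P) :&: K) :&: ((P :\: S) :&: K)| = 0.
    apply/eqP; rewrite cards_eq0; apply/eqP/setP => e; rewrite !inE;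
    by case: (e \in S); case: (e \in P); case: (C \in e).
  rewrite addn0; apply: eq_card => e; rewrite !inE;
  by case: (e \in S); case: (e \in P); case: (C \in e).
rewrite h1 h2 h3 !oddD.
by case: (odd #|S :&: P :&: K|); case: (odd #|(S :\: P) :&: K|); case: (odd #|(P :\: S) :&: K|).
Qed.

Lemma oddset_sdiff S P : oddset (sdiff S P) = sdiff (oddset S) (oddset P).
Proof.
apply/setP => C; rewrite in_sdiff !inE degC_sdiff.
by case: (C \in circuits nb).
Qed.

Lemma oddset0 : oddset set0 = set0.
Proof.
apply/setP => C; rewrite !inE /degC.
have -> : [set e in (set0 : {set {set {set V * 'I_4}}}) | C \in e] = set0.
  by apply/setP => e; rewrite !inE.
by rewrite cards0 andbF.
Qed.

Lemma oddset_sub S : oddset S \subset circuits nb.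
Proof. by apply/subsetP => C; rewrite inE => /andP[]. Qed.

Lemma cpair_sub v : cpair nb v \subset circuits nb.
Proof.
apply/subsetP => C; rewrite !inE => /orP[] /eqP ->; apply/imsetP; by eexists.
Qed.

Lemma oddset1 e : e \in EC nb -> oddset [set e] = e.
Proof.
case/imsetP => v _ ->; apply/setP => C; rewrite !inE /degC.
case: (boolP (C \in cpair nb v)) => H.
  have -> : [set e' in [set cpair nb v] | C \in e'] = [set cpair nb v].
    by apply/setP => e'; rewrite !inE; case: eqP => // ->.
  rewrite cards1 /= andbT.
  move: H; rewrite !inE => H; rewrite H.
  by move/subsetP: (cpair_sub v) => /(_ C); rewrite !inE H => ->.
have -> : [set e' in [set cpair nb v] | C \in e'] = set0.
  by apply/setP => e'; rewrite !inE; case: eqP => // ->; rewrite (negbTE H).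
by move: H; rewrite !inE cards0 andbF => /negbTE ->.
Qed.

End O.

Section Q.
Variables (V : finType) (nb : V -> 'I_4 -> V).
Hypothesis Hinj : forall v, injective (nb v).
Hypothesis Hsym : forall v i, exists j, nb (nb v i) j = v.
Hypothesis Hconn : forall u v, connect (fun a b => [exists i, nb a i == b]) u v.
Variable u0 : {set V * 'I_4}.

Definition Qc (C : {set V * 'I_4}) :=
  exists2 P : {set {set {set V * 'I_4}}}, P \subset EC nb & oddset nb P = sdiff [set u0] [set C].

Lemma Q_step (C D : {set V * 'I_4}) : Qc C -> [set C; D] \in EC nb -> C != D -> Qc D.
Proof.
case=> P HP HO HE HCD; exists (sdiff P [set [set C; D]]).
  by apply: sdiff_sub => //; rewrite sub1set.
rewrite oddset_sdiff HO oddset1 //; apply/setP => x; rewrite !in_sdiff !inE.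
by case: eqP => _; case: eqP => Hc; case: eqP => Hd //=; move: HCD; rewrite -Hc -Hd eqxx.
Qed.

Lemma Q_vertex v : Qc (circ nb (v, slot0)) <-> Qc (circ nb (v, slot1)).
Proof.
case: (boolP (crossing nb v)) => Hc; last by move: Hc; rewrite /crossing negbK => /eqP ->.
have He : cpair nb v \in EC nb by apply/imsetP; exists v; rewrite ?inE.
split => HQ; first exact: Q_step HQ He Hc.
apply: Q_step HQ _ _; last by rewrite eq_sym.
by rewrite setUC.
Qed.

Lemma Q_all_slots v i : Qc (circ nb (v, i)) -> forall j, Qc (circ nb (v, j)).
Proof.
move=> H j.
have H0 : Qc (circ nb (v, slot0)).
  by case: (circ_cases Hinj Hsym v i) => E; rewrite E in H => //; apply/Q_vertex.
by case: (circ_cases Hinj Hsym v j) => ->; [done | apply/Q_vertex].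
Qed.

Lemma Q_all v0 : u0 = circ nb (v0, slot0) -> forall C, C \in circuits nb -> Qc C.
Proof.
move=> Hu0.
have H0 : forall j, Qc (circ nb (v0, j)).
  apply: (@Q_all_slots v0 slot0); exists set0; first exact: sub0set.
  by rewrite oddset0 -Hu0; apply/setP => x; rewrite in_sdiff addbb inE.
have gen : forall p a, (forall j, Qc (circ nb (a, j))) ->
    path (fun a b => [exists i, nb a i == b]) a p ->
    forall j, Qc (circ nb (last a p, j)).
  elim => [|b p IH] a Ha //= /andP [/existsP [i /eqP Hi] Hp].
  apply: IH Hp; apply: (@Q_all_slots b (opp_slot nb (a, i))).
  by rewrite -Hi -(circ_edge Hinj Hsym).
move=> C /imsetP [[v j] _ ->].
have /connectP [p Hp ->] := Hconn v0 v.
exact: gen.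
Qed.

End Q.

Local Open Scope ring_scope.

Section Flip.
Variables (R : realFieldType) (V : finType) (nb : V -> 'I_4 -> V) (beta : R).
Variables (ref ref' : {set V * 'I_4} -> V * 'I_4) (X : {set V * 'I_4} -> bool).
Hypothesis Hbeta : 1 < beta.
Hypothesis HX : forall v, crossing nb v ->
        X (circ nb (v, slot0)) (+) X (circ nb (v, slot1))
        = (Acount nb beta ref (cpair nb v) < Dcount nb beta ref (cpair nb v))%N.
Hypothesis Href' : forall C, C \in circuits nb ->
           if X C then link nb (ref C) (ref' C) else ref' C == ref C.

Lemma vw_nz s v : nonzero_orientation nb beta s ->
  s (v, slot3) = ~~ s (v, slot0) /\ s (v, slot2) = ~~ s (v, slot1).
Proof.
case/andP => _ Hp.
have : vweight beta s v != 0.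
  by apply: contra Hp => /eqP H; apply/eqP; rewrite (bigD1 v) //= H mul0r.
rewrite /vweight /fstar.
by case: (s (v, slot0)); case: (s (v, slot1)); case: (s (v, slot2));
  case: (s (v, slot3)); rewrite /= ?eqxx.
Qed.

Lemma nz_link s h h' : nonzero_orientation nb beta s -> link nb h h' -> s h' = ~~ s h.
Proof.
move=> Hs; have := Hs; case/andP => /forallP Hor _.
case/orP => /eqP ->; first by apply/eqP; exact: Hor.
case: h => v i; rewrite /pair_he /=.
have [H3 H2] := vw_nz v Hs.
case: (slot_cases i) => [[-> ->]|[-> ->]|[-> ->]|[-> ->]];
  by rewrite ?H3 ?H2 ?negbK.
Qed.

Lemma s_ref' s C : nonzero_orientation nb beta s -> C \in circuits nb ->
  s (ref' C) = s (ref C) (+) X C.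
Proof.
move=> Hs HC; have := Href' HC; case: (X C) => H.
  by rewrite (nz_link Hs H) addbT.
by rewrite (eqP H) addbF.
Qed.

Lemma circ_in v i : circ nb (v, i) \in circuits nb.
Proof. by apply/imsetP; exists (v, i). Qed.

Lemma agree' v :
  agree nb beta ref' v = (if X (circ nb (v, slot0)) (+) X (circ nb (v, slot1))
     then disagree nb beta ref v else agree nb beta ref v).
Proof.
rewrite /agree /disagree.
case E0 : (X (circ nb (v, slot0))); case E1 : (X (circ nb (v, slot1))) => /=;
  apply: eq_forallb => s; case Hs: (nonzero_orientation nb beta s) => //=;
  rewrite !(s_ref' Hs (circ_in _ _)) E0 E1;
  move: (vweight beta s v == beta) (s (ref (circ nb (v, slot0)))) (s (ref (circ nb (v, slot1))));
  by case; case; case.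
Qed.

Lemma disagree' v :
  disagree nb beta ref' v = (if X (circ nb (v, slot0)) (+) X (circ nb (v, slot1))
     then agree nb beta ref v else disagree nb beta ref v).
Proof.
rewrite /agree /disagree.
case E0 : (X (circ nb (v, slot0))); case E1 : (X (circ nb (v, slot1))) => /=;
  apply: eq_forallb => s; case Hs: (nonzero_orientation nb beta s) => //=;
  rewrite !(s_ref' Hs (circ_in _ _)) E0 E1;
  move: (vweight beta s v == beta) (s (ref (circ nb (v, slot0)))) (s (ref (circ nb (v, slot1))));
  by case; case; case.
Qed.

Lemma Acount_flip e : Acount nb beta ref' e =
  if (Acount nb beta ref e < Dcount nb beta ref e)%N then Dcount nb beta ref e
  else Acount nb beta ref e.
Proof.
rewrite /Acount /Dcount; case: ifP => Hb; apply: eq_card => v; rewrite !inE;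
  case Hc: (crossing nb v); case He: (cpair nb v == e) => //=;
  rewrite agree' (HX Hc) (eqP He) /Acount /Dcount Hb; reflexivity.
Qed.

Lemma Dcount_flip e : Dcount nb beta ref' e =
  if (Acount nb beta ref e < Dcount nb beta ref e)%N then Acount nb beta ref e
  else Dcount nb beta ref e.
Proof.
rewrite /Acount /Dcount; case: ifP => Hb; apply: eq_card => v; rewrite !inE;
  case Hc: (crossing nb v); case He: (cpair nb v == e) => //=;
  rewrite disagree' (HX Hc) (eqP He) /Acount /Dcount Hb; reflexivity.
Qed.

Lemma count_flip e :
  (Dcount nb beta ref' e <= Acount nb beta ref' e)%N.
Proof.
rewrite Acount_flip Dcount_flip; case: ifP => [/ltnW //|].
by move/negbT; rewrite -leqNgt.
Qed.

Lemma xe_bounds e : 0 <= x_e nb beta ref' e <= 1.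
Proof.
rewrite /x_e /beta_e.
have Hle := count_flip e.
rewrite (subzn Hle).
set k := (Acount nb beta ref' e - Dcount nb beta ref' e)%N.
have H1 : 1 <= beta ^ (k%:Z).
  by apply: exprn_ege1; apply: ltW.
move: H1; move: (beta ^ (k%:Z)) => b H1.
have Hb : 0 < b + 1 by lra.
apply/andP; split.
  by apply: divr_ge0; lra.
by rewrite ler_pdivrMr // mul1r; lra.
Qed.

End Flip.

Section Count.
Variables (V : finType) (nb : V -> 'I_4 -> V).
Hypothesis Hinj : forall v, injective (nb v).
Hypothesis Hsym : forall v i, exists j, nb (nb v i) j = v.
Hypothesis Hconn : forall u v, connect (fun a b => [exists i, nb a i == b]) u v.
Variable v0 : V.
Implicit Types (S : {set {set {set V * 'I_4}}}) (D : {set V * 'I_4}).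
Let u0 := circ nb (v0, slot0).

Definition Pf (D : {set V * 'I_4}) : {set {set {set V * 'I_4}}} :=
  odflt set0 [pick P : {set {set {set V * 'I_4}}} |
     (P \subset EC nb) && (oddset nb P == sdiff [set u0] [set D])].

Lemma PfP D : D \in circuits nb ->
  Pf D \subset EC nb /\ oddset nb (Pf D) = sdiff [set u0] [set D].
Proof.
rewrite /Pf; case: pickP => [P /andP [H1 /eqP H2] | H] //= HD.
have [P H1 H2] := Q_all Hinj Hsym Hconn (erefl u0) HD.
by move: (H P); rewrite H1 H2 eqxx.
Qed.

Lemma Omega0_odd S : S \in Omega nb 0 -> oddset nb S = set0.
Proof. rewrite inE => /andP [_ /eqP H]; apply/eqP; rewrite -cards_eq0; exact/eqP. Qed.

Lemma count2 : ((#|circuits nb| - 1) * #|Omega nb 0| <= #|Omega nb 2|)%N.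
Proof.
have Hu0 : u0 \in circuits nb by apply/imsetP; exists (v0, slot0).
set Dom := setX (Omega nb 0) (circuits nb :\ u0).
have -> : ((#|circuits nb| - 1) * #|Omega nb 0| = #|Dom|)%N.
  by rewrite cardsX mulnC (cardsD1 u0 (circuits nb)) Hu0 add1n subn1.
pose F := fun p : {set {set {set V * 'I_4}}} * {set V * 'I_4} => sdiff p.1 (Pf p.2).
have HO : forall S D, S \in Omega nb 0 -> D \in circuits nb ->
    oddset nb (F (S, D)) = sdiff [set u0] [set D].
  move=> S D HS HD; rewrite /F /= oddset_sdiff Omega0_odd // sdiff0s.
  by case: (PfP HD).
have Hinj' : {in Dom &, injective F}.
  move=> [S D] [S' D'] /setXP [HS HD] /setXP [HS' HD'] E.
  move: HD HD'; rewrite !inE => /andP [HDu HD] /andP [HDu' HD'].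
  have E2 := congr1 (oddset nb) E; rewrite HO // HO // in E2.
  have HDD : D = D'.
    move/setP: E2 => /(_ D); rewrite !in_sdiff !inE eqxx (negbTE HDu) /=.
    by move=> /esym /eqP.
  subst D'; move: E; rewrite /F /= => E.
  by rewrite -(sdiffK S (Pf D)) E sdiffK.
rewrite -(card_in_imset Hinj'); apply: subset_leq_card.
apply/subsetP => _ /imsetP [[S D] /setXP [HS HD] ->].
move: HD; rewrite !inE => /andP [HDu HD].
apply/andP; split.
  apply: sdiff_sub; last by case: (PfP HD).
  by move: HS; rewrite inE => /andP [].
rewrite /n_odd -/(oddset nb _) HO //.
have -> : sdiff [set u0] [set D] = [set u0; D].
  apply/setP => x; rewrite in_sdiff !inE.
  by case: eqP => Ha; case: eqP => Hb //=; move: HDu; rewrite -Ha -Hb eqxx.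
have HuD : u0 != D by rewrite eq_sym.
by rewrite cards2 HuD.
Qed.

Lemma card_O02 : (#|Omega nb 0| + #|Omega nb 2| <= 2 ^ #|EC nb|)%N.
Proof.
rewrite -cardsUI.
have -> : #|Omega nb 0 :&: Omega nb 2| = 0%N.
  apply/eqP; rewrite cards_eq0; apply/eqP/setP => S; rewrite !inE.
  by case: (S \subset EC nb) => //=; case: (n_odd nb S) => [|[|[|k]]].
rewrite addn0 -card_powerset; apply: subset_leq_card.
apply/subsetP => S; rewrite !inE ?powersetE.
by case/orP => /andP [].
Qed.

Lemma m_ge2 S : S \in Omega nb 2 -> (2 <= #|circuits nb|)%N.
Proof.
rewrite inE => /andP [_ /eqP H].
apply: leq_trans (subset_leq_card (oddset_sub nb S)).
exact: (eq_leq (esym H)).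
Qed.

End Count.

Section Real.
Variables (R : realFieldType) (V : finType) (nb : V -> 'I_4 -> V) (beta : R).
Variable (ref' : {set V * 'I_4} -> V * 'I_4).
Implicit Types (S : {set {set {set V * 'I_4}}}).
Hypothesis Hxe : forall e, 0 <= x_e nb beta ref' e <= 1.

Lemma xmin_ge0 : 0 <= x_min nb beta ref'.
Proof. by apply: le_bigmin => // e _; case/andP: (Hxe e). Qed.

Lemma xmin_le1 : x_min nb beta ref' <= 1.
Proof. exact: bigmin_le_id. Qed.

Lemma xmin_le e : e \in EC nb -> x_min nb beta ref' <= x_e nb beta ref' e.
Proof. by move=> He; apply: bigmin_le_cond. Qed.

Lemma wS_ge0 S : 0 <= wS nb beta ref' S.
Proof. by apply: prodr_ge0 => e _; case/andP: (Hxe e). Qed.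

Lemma wS_le1 S : wS nb beta ref' S <= 1.
Proof. by apply: prodr_ile1 => e _; apply: Hxe. Qed.

Lemma wS_ge S : S \subset EC nb -> x_min nb beta ref' ^+ #|EC nb| <= wS nb beta ref' S.
Proof.
move=> HS; apply: (@le_trans _ _ (x_min nb beta ref' ^+ #|S|)).
  by apply: ler_wiXn2l; [exact: xmin_ge0 | exact: xmin_le1 | exact: subset_leq_card].
rewrite /wS -prodr_const; apply: ler_prod => e He.
rewrite xmin_ge0 xmin_le //; exact: (subsetP HS).
Qed.

Lemma Zk_ge0 k : 0 <= Zk nb beta ref' k.
Proof. by apply: sumr_ge0 => S _; exact: wS_ge0. Qed.

Lemma Zk_le k : Zk nb beta ref' k <= #|Omega nb k|%:R.
Proof.
rewrite /Zk -sumr_const; apply: ler_sum => S _; exact: wS_le1.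
Qed.

Lemma Z0_ge1 : 1 <= Zk nb beta ref' 0.
Proof.
have H0 : set0 \in Omega nb 0.
  by rewrite inE sub0set /n_odd -/(oddset nb _) oddset0 cards0.
rewrite /Zk (bigD1 set0) //= {1}/wS big_set0 lerDl.
by apply: sumr_ge0 => S _; exact: wS_ge0.
Qed.

End Real.

Lemma arith (R : realFieldType) (m a0 a2 Z0 Z2 N xi w L : R) :
  0 <= Z0 <= a0 -> 0 <= Z2 <= a2 -> 1 <= Z0 -> 1 <= m -> 0 < N ->
  a0 + a2 <= N -> m * a0 <= a0 + a2 -> 0 <= L <= w ->
  (xi = m /\ (2 <= m \/ a2 = 0)) \/ xi = 2 ->
  1 / 2 * (L / N) <= xi * w / (m * Z0 + 2 * Z2).
Proof.
move=> /andP [HZ0 HZa] /andP [HZ2 HZb] HZ1 Hm HN Ha Hma /andP [HL HLw] Hxi.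
have HmZ : m * Z0 <= m * a0 by apply: ler_wpM2l; lra.
have Hm1 : 1 <= m * Z0 by rewrite -[1](mulr1 1); apply: ler_pM => //; lra.
have Hpos : 0 < m * Z0 + 2 * Z2 by lra.
have Hxi0 : 0 <= xi by case: Hxi => [[-> _]|->]; lra.
have Hb : m * Z0 + 2 * Z2 <= 2 * N * xi.
  case: Hxi => [[-> [H2|H0]]|->].
  - have : 2 * N <= m * N by apply: ler_wpM2r; lra.
    lra.
  - move: HZb; rewrite H0 => HZb.
    have : N <= m * N by rewrite -[X in X <= _]mul1r; apply: ler_wpM2r; lra.
    lra.
  - lra.
rewrite ler_pdivlMr //.
set q := L / N.
have Hq : q * N = L by rewrite /q divfK // gt_eqF.
have Hq0 : 0 <= q by apply: divr_ge0 => //; apply: ltW.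
have P1 : q * (m * Z0 + 2 * Z2) <= q * (2 * N * xi) by apply: ler_wpM2l.
have P2 : xi * L <= xi * w by apply: ler_wpM2l.
have E : q * (2 * N * xi) = 2 * (xi * L) by rewrite -Hq; ring.
lra.
Qed.

Unset Implicit Arguments.

Theorem lemma5 (R : realFieldType) (V : finType) (nb : V -> 'I_4 -> V) (beta : R)
  (Hbeta : 1 < beta)
  (Hne : (0 < #|V|)%N)
  (Hinj : forall v, injective (nb v))
  (Hloop : forall v i, nb v i != v)
  (Hsym : forall v i, exists j, nb (nb v i) j = v)
  (Hconn : forall u v, connect (fun a b => [exists i, nb a i == b]) u v)
  (ref : {set V * 'I_4} -> V * 'I_4)
  (Href : forall C, C \in circuits nb -> ref C \in C)
  (X : {set V * 'I_4} -> bool)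
  (HX : forall v, crossing nb v ->
        X (circ nb (v, slot0)) (+) X (circ nb (v, slot1))
        = (Acount nb beta ref (cpair nb v) < Dcount nb beta ref (cpair nb v))%N)
  (ref' : {set V * 'I_4} -> V * 'I_4)
  (Href' : forall C, C \in circuits nb ->
           if X C then link nb (ref C) (ref' C) else ref' C == ref C)
  (S : {set {set {set V * 'I_4}}})
  (HS : S \in Omega_worm nb) :
  1 / 2 * (x_min nb beta ref' / 2) ^+ #|EC nb| <= pi_worm nb beta ref' S.
Proof.
have Hxe : forall e, 0 <= x_e nb beta ref' e <= 1.
  move=> e; exact: (xe_bounds Hbeta HX Href').
have [v0 _] := card_gt0P Hne.
have Hc2 := count2 Hinj Hsym Hconn v0.
have Hcs := card_O02 nb.
have Hm : (1 <= #|circuits nb|)%N.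
  by apply/card_gt0P; exists (circ nb (v0, slot0)); apply/imsetP; exists (v0, slot0).
have Hma : (#|circuits nb| * #|Omega nb 0| <= #|Omega nb 0| + #|Omega nb 2|)%N.
  have -> : (#|circuits nb| * #|Omega nb 0| = #|Omega nb 0| + (#|circuits nb| - 1) * #|Omega nb 0|)%N.
    by rewrite -{1}(subnK Hm) mulnDl mul1n addnC.
  by rewrite leq_add2l.
have HSsub : S \subset EC nb.
  by move: HS; rewrite !inE => /orP [] /andP [].
rewrite /pi_worm /w_worm /Z_worm expr_div_n.
apply: (@arith _ _ (#|Omega nb 0|%:R) (#|Omega nb 2|%:R)).
- by rewrite (Zk_ge0 Hxe) (Zk_le Hxe).
- by rewrite (Zk_ge0 Hxe) (Zk_le Hxe).
- exact: (Z0_ge1 Hxe).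
- by rewrite ler1n.
- by rewrite exprn_gt0.
- by rewrite -natrD -natrX ler_nat.
- by rewrite -natrM -natrD ler_nat.
- by rewrite exprn_ge0 ?(xmin_ge0 Hxe) // (wS_ge Hxe HSsub).
rewrite /xi; case: ifP => H0.
  left; split => //.
  case: (leqP 2 #|circuits nb|) => H2; first by left; rewrite ler_nat.
  right.
  have -> : #|Omega nb 2| = 0%N.
    apply/eqP; rewrite cards_eq0; apply: contraT => /set0Pn [T /m_ge2].
    by rewrite leqNgt H2.
  by [].
have H2 : S \in Omega nb 2 by move: HS; rewrite inE H0.
by right; rewrite H2.
Qed.
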